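(* Let $\mathcal{D}$ be a DCR graph and suppose $\mathbf{1}\triangleright P_0\xrightarrow{\tau}P_1\xrightarrow{\tau}\cdots\xrightarrow{\tau}P_n$ with $P_0=\textsc{dcrpsi}(\mathcal{D})$. Then the generation component (fourth component) of the frame $\mathcal{F}(P_n)$ is $s^n(0)$, i.e. equals $n$.
   Context: A DCR graph is a tuple $(E,M,\to\!\bullet,\bullet\!\to,\to\!\diamond,\to\!+,\to\!\%)$ where $E$ is a set of events (names from a nominal set), $M=(Ex',Re',In')$ is a triple of subsets of $E$ (the marking), and $\to\!\bullet,\bullet\!\to,\to\!\diamond,\to\!+,\to\!\%\subseteq E\times E$ are the condition, response, milestone, include and exclude relations. For a relation $\to$ write $e\!\to=\{f\mid e\to f\}$ and $\to\! e=\{f\mid f\to e\}$. dcrPsi instance: assertions are quadruples $(Ex,Re,In,G)$ with $Ex,Re,In\subseteq E$ and $G$ a natural number built from $0$ and successor $s(\cdot)$ (the generation); terms are a distinguished channel name $m$ and assertions; conditions are triples $(Co,Mi,e)$ with $Co,Mi\subseteq E$, $e\in E$; channel equality is $=$; unit $\mathbf{1}=(\emptyset,\emptyset,\emptyset,0)$; composition: $(Ex,Re,In,G)\otimes(Ex',Re',In',G')$ equals the first argument if $G>G'$, the second if $G<G'$, and $(Ex\cup Ex',Re\cup Re',In\cup In',G)$ if $G=G'$; entailment: $(Ex,Re,In,G)\vdash(Co,Mi,e)$ iff $e\in In$, $In\cap Co\subseteq Ex$ and $In\cap Mi\cap Re=\emptyset$. Psi-calculus: processes $\mathbf{0}$,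 $(\!|\Psi|\!)$, $\overline{M}\langle N\rangle.P$, $\underline{M}(\lambda\tilde x)N.P$, $\mathbf{case}\ \tilde\varphi:\tilde P$, $P\mid Q$, $!P$. Frames: $\mathcal{F}((\!|\Psi|\!))=\Psi$, $\mathcal{F}(P\mid Q)=\mathcal{F}(P)\otimes\mathcal{F}(Q)$, frame of $\mathbf{0}$, prefixed, case and replicated processes is $\mathbf{1}$. Transitions $\Psi\triangleright P\xrightarrow{\alpha}P'$ are generated by: (Out) if $\Psi\vdash M\leftrightarrow K$ then $\Psi\triangleright\overline{M}\langle N\rangle.P\xrightarrow{\overline{K}N}P$; (In) if $\Psi\vdash M\leftrightarrow K$ then $\Psi\triangleright\underline{M}(\lambda\tilde y)N.P\xrightarrow{\underline{K}N[\tilde y:=\tilde L]}P[\tilde y:=\tilde L]$ for any terms $\tilde L$; (Case) if $\Psi\triangleright P_i\xrightarrow{\alpha}P'$ and $\Psi\vdash\varphi_i$ then $\Psi\triangleright\mathbf{case}\ \tilde\varphi:\tilde P\xrightarrow{\alpha}P'$; (Par) if $\Psi\otimes\mathcal{F}(Q)\triangleright P\xrightarrow{\alpha}P'$ then $\Psi\triangleright P\mid Q\xrightarrow{\alpha}P'\mid Q$, and symmetrically; (Rep) if $\Psi\triangleright P\mid !P\xrightarrow{\alpha}P'$ then $\Psi\triangleright !P\xrightarrow{\alpha}P'$; (Com) if $\mathcal{F}(P)=\Psi_P$, $\mathcal{F}(Q)=\Psi_Q$, $\Psi_Q\otimes\Psi\triangleright P\xrightarrow{\overline{M}N}P'$,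 $\Psi_P\otimes\Psi\triangleright Q\xrightarrow{\underline{K}N}Q'$ and $\Psi_Q\otimes\Psi_P\otimes\Psi\vdash M\leftrightarrow K$, then $\Psi\triangleright P\mid Q\xrightarrow{\tau}P'\mid Q'$, and symmetrically. Assertion processes and $\mathbf{0}$ have no transitions. Set-expressions in terms are identified with their values after substitution. Translation: $\textsc{dcrpsi}(\mathcal{D})=P_s\mid\big|_{e\in E}P_e$ with $P_s=(\!|(Ex',Re',In',0)|\!)\mid\overline{m}\langle(Ex',Re',In',0)\rangle.\mathbf{0}$ and $P_e=!\big(\mathbf{case}\ \varphi_e:\underline{m}(\lambda X_E,X_R,X_I,X_G)(X_E,X_R,X_I,X_G).(\overline{m}\langle U_e\rangle.\mathbf{0}\mid(\!|U_e|\!))\big)$, where $U_e=(X_E\cup\{e\},(X_R\setminus\{e\})\cup e\!\bullet\!\!\to,(X_I\setminus e\!\to\!\%)\cup e\!\to\!+,s(X_G))$ and $\varphi_e=(\to\!\bullet e,\to\!\diamond e,e)$. *)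

(* Defs.v *)
From mathcomp Require Import all_boot.
Set Implicit Arguments.
Unset Strict Implicit.
Unset Printing Implicit Defensive.

Section DcrPsi.
Variable E : finType.

Record dcr_graph := DCR {
  mEx : {set E}; mRe : {set E}; mIn : {set E};
  rcond : rel E;
  rresp : rel E;
  rmile : rel E;
  rincl : rel E;
  rexcl : rel E
}.

Definition post (r : rel E) (e : E) : {set E} := [set f | r e f].
Definition pre  (r : rel E) (e : E) : {set E} := [set f | r f e].

Record assertion := Asn { aEx : {set E}; aRe : {set E}; aIn : {set E}; aG : nat }.

Definition unitA : assertion := Asn set0 set0 set0 0.

Definition compA (a b : assertion) : assertion :=
  if aG b < aG a then a
  else if aG a < aG b then b
  else Asn (aEx a :|: aEx b) (aRe a :|: aRe b) (aIn a :|: aIn b) (aG a).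

Inductive term := Chan | Ast of assertion.

Record cond := Cond { cCo : {set E}; cMi : {set E}; cev : E }.

Definition entails (a : assertion) (c : cond) : Prop :=
  cev c \in aIn a /\ aIn a :&: cCo c \subset aEx a /\ aIn a :&: cMi c :&: aRe a = set0.

Definition chan_eq (a : assertion) (M K : term) : Prop := M = K.

(* The input prefix
   M(\lambda X_E,X_R,X_I,X_G) N . P is represented in higher-order
   abstract syntax: the function yields, for values of the bound
   variables, the pair (N, P) after substitution. *)
Inductive proc :=
| Nil
| Ass of assertion
| Out of term & term & proc
| Inp of term & ({set E} -> {set E} -> {set E} -> nat -> (term * proc))
| Case of list (cond * proc)
| Par of proc & proc
| Rep of proc.

Fixpoint frame (P : proc) : assertion :=
  match P with
  | Ass a => a
  | Par P Q => compA (frame P) (frame Q)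
  | _ => unitA
  end.

Inductive label := LOut of term & term | LIn of term & term | Tau.

Inductive trans : assertion -> proc -> label -> proc -> Prop :=
| tOut Psi M K N P :
    chan_eq Psi M K -> trans Psi (Out M N P) (LOut K N) P
| tIn Psi M K f XE XR XI XG :
    chan_eq Psi M K ->
    trans Psi (Inp M f) (LIn K (f XE XR XI XG).1) (f XE XR XI XG).2
| tCase Psi cs phi P a P' :
    (exists i, i < size cs /\ nth (phi, P) cs i = (phi, P)) -> trans Psi P a P' -> entails Psi phi ->
    trans Psi (Case cs) a P'
| tParL Psi P Q a P' :
    trans (compA Psi (frame Q)) P a P' -> trans Psi (Par P Q) a (Par P' Q)
| tParR Psi P Q a Q' :
    trans (compA Psi (frame P)) Q a Q' -> trans Psi (Par P Q) a (Par P Q')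
| tRep Psi P a P' :
    trans Psi (Par P (Rep P)) a P' -> trans Psi (Rep P) a P'
| tComL Psi P Q M K N P' Q' :
    trans (compA (frame Q) Psi) P (LOut M N) P' ->
    trans (compA (frame P) Psi) Q (LIn K N) Q' ->
    chan_eq (compA (compA (frame Q) (frame P)) Psi) M K ->
    trans Psi (Par P Q) Tau (Par P' Q')
| tComR Psi P Q M K N P' Q' :
    trans (compA (frame Q) Psi) P (LIn K N) P' ->
    trans (compA (frame P) Psi) Q (LOut M N) Q' ->
    chan_eq (compA (compA (frame Q) (frame P)) Psi) M K ->
    trans Psi (Par P Q) Tau (Par P' Q').

Fixpoint bigpar (s : list proc) : proc :=
  match s with
  | nil => Nil
  | P :: nil => P
  | P :: s' => Par P (bigpar s')
  end.

Section Translation.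
Variable D : dcr_graph.

Definition U_e (e : E) (XE XR XI : {set E}) (XG : nat) : assertion :=
  Asn (XE :|: [set e])
      ((XR :\ e) :|: post (rresp D) e)
      ((XI :\: post (rexcl D) e) :|: post (rincl D) e)
      XG.+1.

Definition phi_e (e : E) : cond := Cond (pre (rcond D) e) (pre (rmile D) e) e.

Definition P_s : proc :=
  Par (Ass (Asn (mEx D) (mRe D) (mIn D) 0))
      (Out Chan (Ast (Asn (mEx D) (mRe D) (mIn D) 0)) Nil).

Definition P_e (e : E) : proc :=
  Rep (Case ((phi_e e,
              Inp Chan (fun XE XR XI XG =>
                 (Ast (Asn XE XR XI XG),
                  Par (Out Chan (Ast (U_e e XE XR XI XG)) Nil)
                      (Ass (U_e e XE XR XI XG))))) :: nil)).

Definition dcrpsi : proc := Par P_s (bigpar (map P_e (enum E))).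
End Translation.
End DcrPsi.

(* Main.v *)
Require Import Defs.
From mathcomp Require Import all_boot.
From mathcomp Require Import zify.

Section S.
Variable E : finType.
Variable D : dcr_graph E.

Definition body (e : E) := fun XE XR XI XG =>
  (Ast (Asn XE XR XI XG),
   Par (Out (Chan E) (Ast (U_e D e XE XR XI XG)) (Defs.Nil E)) (Ass (U_e D e XE XR XI XG))).

Fixpoint wf (P : proc E) : Prop :=
  match P with
  | Defs.Nil => True
  | Ass _ => True
  | Out M N R => M = Chan E /\ (exists a, N = Ast a) /\ R = Defs.Nil E
  | Inp M f => M = Chan E /\ exists e, f = body e
  | Case cs => exists e, cs = ((phi_e D e, Inp (Chan E) (body e)) :: nil)
  | Par P Q => wf P /\ wf Q
  | Rep B => exists e, B = Case ((phi_e D e, Inp (Chan E) (body e)) :: nil)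
  end.

Fixpoint outs (P : proc E) : seq (assertion E) :=
  match P with
  | Out _ (Ast a) _ => [:: a]
  | Par P Q => outs P ++ outs Q
  | _ => [::]
  end.

Lemma aG_compA (a b : assertion E) : aG (Defs.compA a b) = maxn (aG a) (aG b).
Proof.
rewrite /Defs.compA; case: ifP => h1; last case: ifP => h2; rewrite /=; lia.
Qed.

Lemma out_lem {Psi P l P'} : trans Psi P l P' -> forall M N, l = LOut M N -> wf P ->
  exists a, N = Ast a /\ (exists s1 s2, outs P = s1 ++ a :: s2 /\ outs P' = s1 ++ s2)
   /\ aG (frame P') = aG (frame P) /\ wf P'.
Proof.
induction 1 => M0 N0 hl hw; try discriminate.
- case: hl => _ <-. case: hw => [-> [[a ->] ->]].
  exists a; split => //; split; last by [].
  by exists [::], [::].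
- case: H => i [hi hn].
  case: hw => e ?; subst cs. case: i hi hn => // _ [_ hP]; subst P.
  case: (IHtrans _ _ hl (conj erefl (ex_intro _ e erefl))) => a0 [h1 [[s1 [s2 [h2 h3]]] h4]].
  by exists a0; split => //; split => //; exists s1, s2.
- case: hw => w1 w2.
  case: (IHtrans _ _ hl w1) => b [-> [[s1 [s2 [h1 h2]]] [hf w']]].
  exists b; split => //; split; [|split; last by []].
  + exists s1, (s2 ++ outs Q); rewrite /= h1 h2 -!catA //.
  + by rewrite /= !aG_compA hf.
- case: hw => w1 w2.
  case: (IHtrans _ _ hl w2) => b [-> [[s1 [s2 [h1 h2]]] [hf w']]].
  exists b; split => //; split; [|split; last by []].
  + exists (outs P ++ s1), s2; rewrite /= h1 h2 -!catA //.
  + by rewrite /= !aG_compA hf.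
- have hw' : wf (Par P (Rep P)) by split => //; case: hw => e ->; exists e.
  case: (IHtrans _ _ hl hw') => b [-> [[s1 [s2 [h1 h2]]] _]].
  case: hw => e ?; subst P. move: h1 => /= /(f_equal size); rewrite size_cat /=; lia.
Qed.

Lemma in_lem {Psi P l P'} : trans Psi P l P' -> forall K N, l = LIn K N -> wf P ->
  exists XE XR XI XG U, N = Ast (Asn XE XR XI XG) /\ size (outs P') = (size (outs P)).+1 /\ (outs P = [::] -> outs P' = [:: U])
   /\ aG U = XG.+1 /\ aG (frame P') = maxn (aG (frame P)) XG.+1 /\ wf P'.
Proof.
induction 1 => K0 N0 hl hw; try discriminate.
- case: hl => _ <-. case: hw => [-> [e ->]].
  exists XE, XR, XI, XG, (U_e D e XE XR XI XG); split => //; split => //; split => //.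
  split => //; split; first by rewrite /=; lia.
  by split => //; split => //; split => //; eexists.
- case: H => i [hi hn].
  case: hw => e ?; subst cs. case: i hi hn => // _ [_ hP]; subst P.
  case: (IHtrans _ _ hl (conj erefl (ex_intro _ e erefl))) => XE [XR [XI [XG [U [h1 [h2 h3]]]]]].
  by exists XE, XR, XI, XG, U.
- case: hw => w1 w2.
  case: (IHtrans _ _ hl w1) => XE [XR [XI [XG [U [-> [hs [ho [hu [hf w']]]]]]]]].
  exists XE, XR, XI, XG, U; split => //; split; first by rewrite /= !size_cat hs.
  split.
    move=> /= h0; have [hp hq] : outs P = [::] /\ outs Q = [::] by case: (outs P) h0 => //; case: (outs Q).
    by rewrite ho ?hq.
  split => //; split; [rewrite /= !aG_compA hf; lia | by split].
- case: hw => w1 w2.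
  case: (IHtrans _ _ hl w2) => XE [XR [XI [XG [U [-> [hs [ho [hu [hf w']]]]]]]]].
  exists XE, XR, XI, XG, U; split => //; split; first by rewrite /= !size_cat hs addnS.
  split.
    move=> /= h0; have [hp hq] : outs P = [::] /\ outs Q = [::] by case: (outs P) h0 => //; case: (outs Q).
    by rewrite ho ?hp.
  split => //; split; [rewrite /= !aG_compA hf; lia | by split].
- have hw' : wf (Par P (Rep P)) by split => //; case: hw => e ->; exists e.
  case: (IHtrans _ _ hl hw') => XE [XR [XI [XG [U [-> [hs [ho [hu [hf w']]]]]]]]].
  case: hw => e ?; subst P.
  by exists XE, XR, XI, XG, U.
Qed.

Lemma tau_lem Psi P l P' : trans Psi P l P' -> l = Tau E -> wf P ->
  (outs P <> [::]) /\
  (forall a, outs P = [:: a] -> exists a', outs P' = [:: a'] /\ aG a' = (aG a).+1 /\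
      aG (frame P') = maxn (aG (frame P)) (aG a).+1) /\ wf P'.
Proof.
induction 1 => hl hw; try discriminate.
- case: hw => e ?; subst cs. case: H => i [hi hn].
  case: i hi hn => // _ [_ hP]. subst P a. by inversion H0.
- case: hw => w1 w2. case: (IHtrans hl w1) => hne [hs w'].
  split; first by move=> /= h0; apply: hne; case: (outs P) h0.
  split; last by [].
  move=> c /= h. have [hp hq] : outs P = [:: c] /\ outs Q = [::].
    by case: (outs P) hne h => // x [|y r] _ /=; [case => -> -> | move/(f_equal size); rewrite /= size_cat].
  case: (hs c hp) => a' [h1 [h2 h3]]. exists a'; rewrite /= h1 hq !aG_compA h3; split => //; split => //; lia.
- case: hw => w1 w2. case: (IHtrans hl w2) => hne [hs w'].
  split; first by move=> /= /(f_equal size); rewrite size_cat; case: (outs Q) hne => //= x s _; lia.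
  split; last by [].
  move=> c /= h. have [hp hq] : outs P = [::] /\ outs Q = [:: c].
    case: (outs P) h => [|x r] /=; first by [].
    by move/(f_equal size); rewrite /= size_cat; case: (outs Q) hne => //= y s _; lia.
  case: (hs c hq) => a' [h1 [h2 h3]]. exists a'; rewrite /= h1 hp !aG_compA h3; split => //; split => //; lia.
- have hw' : wf (Par P (Rep P)) by split => //; case: hw => e ->; exists e.
  case: (IHtrans hl hw') => hne _. case: hw => e ?; subst P. by case: hne.
- case: hw => w1 w2.
  case: (out_lem H _ _ erefl w1) => a [ha [[s1 [s2 [h1 h2]]] [hf w1']]].
  case: (in_lem H0 _ _ erefl w2) => XE [XR [XI [XG [U [hn [hs [ho [hu [hf2 w2']]]]]]]]].
  split; first by rewrite /= h1; case: s1 {h1 h2}.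
  split; last by [].
  move=> a0 /= h. move: h; rewrite h1 => h.
  have hss : s1 = [::] /\ s2 = [::] /\ outs Q = [::].
    move: (f_equal size h); rewrite /= !size_cat /= => hz.
    split; [apply/size0nil|split; apply/size0nil]; lia.
  case: hss => ? [? hq]; subst s1 s2. case: h => ha0 _; subst a0.
  rewrite ha in hn; case: hn => ->.
  exists U; rewrite /= h2 (ho hq); split => //; split => //.
  rewrite !aG_compA hf hf2 /=; lia.
- case: hw => w1 w2.
  case: (in_lem H _ _ erefl w1) => XE [XR [XI [XG [U [hn [hs [ho [hu [hf2 w1']]]]]]]]].
  case: (out_lem H0 _ _ erefl w2) => a [ha [[s1 [s2 [h1 h2]]] [hf w2']]].
  split; first by move=> /=; rewrite h1 => /(f_equal size); rewrite !size_cat /=; lia.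
  split; last by [].
  move=> a0 /= h. move: h; rewrite h1 => h.
  have hss : s1 = [::] /\ s2 = [::] /\ outs P = [::].
    move: (f_equal size h); rewrite /= !size_cat /= => hz.
    split; [apply/size0nil|split; apply/size0nil]; lia.
  case: hss => ? [? hp]; subst s1 s2. move: h; rewrite hp /= => -[ha0]; subst a0.
  rewrite ha in hn; case: hn => ->.
  exists U; rewrite /= h2 (ho hp); split => //; split => //.
  rewrite !aG_compA hf hf2 /=; lia.
Qed.

Lemma Pe_wf e : wf (P_e D e).
Proof. by exists e. Qed.

Lemma bigpar_lem (l : seq E) :
  wf (bigpar (map (P_e D) l)) /\ outs (bigpar (map (P_e D) l)) = [::] /\
  aG (frame (bigpar (map (P_e D) l))) = 0.
Proof.
elim: l => [|e l [w [o f]]] //=.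
case: l w o f => [|e' l] w o f //=; first by split => //; exact: Pe_wf.
split; first by split => //; exact: Pe_wf.
split; first by [].
by rewrite aG_compA f.
Qed.

Lemma inv_lem (n : nat) (P : nat -> proc E) :
  P 0 = dcrpsi D ->
  (forall i, i < n -> trans (unitA E) (P i) (Tau E) (P i.+1)) ->
  forall k, k <= n -> wf (P k) /\ (exists a, outs (P k) = [:: a] /\ aG a = k) /\ aG (frame (P k)) = k.
Proof.
move=> h0 hs; elim => [_|k IH hk].
  rewrite h0 /dcrpsi. case: (bigpar_lem (enum E)) => w [o f].
  split; first by split => //; split => //; split => //; split => //; eexists.
  split; first by exists (Asn (mEx D) (mRe D) (mIn D) 0); rewrite /= o.
  by rewrite /= !aG_compA f.
case: (IH (ltnW hk)) => w [[a [ho hg]] hf].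
case: (@tau_lem _ _ _ _ (hs k hk) erefl w) => _ [ht w'].
case: (ht a ho) => a' [h1 [h2 h3]].
split => //; split; first by exists a'; rewrite h1 h2 hg.
by rewrite h3 hf hg; lia.
Qed.

End S.

Theorem mainTheorem8 (E : finType) (D : dcr_graph E) (n : nat)
  (P : nat -> proc E) :
  P 0 = dcrpsi D ->
  (forall i, i < n -> trans (unitA E) (P i) (Tau E) (P i.+1)) ->
  aG (frame (P n)) = n.
Proof.
move=> h0 hs. by case: (@inv_lem E D n P h0 hs n (leqnn n)) => _ [_ ->].
Qed.
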